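(* The multi-observation inverse optimization model $\mathbf{IO}(\mathbf{X})$ is feasible.
   Context: Forward problem $\mathbf{FO}(\mathbf{c})$: maximize $\mathbf{c}'\mathbf{x}$ subject to $\mathbf{A}\mathbf{x}\ge\mathbf{b}$ (relevant constraints, $\mathbf{A}\in\mathbb{R}^{m_1\times n}$, $m_1\ge1$, rows $\mathbf{a}_j$), $\mathbf{W}\mathbf{x}\ge\mathbf{q}$ (trivial constraints), $\mathbf{x}\in\mathbb{R}^n$. Its feasible region $\chi$ is assumed nonempty, full-dimensional and free of redundant constraints. Given observations $\mathbf{X}=\{\mathbf{x}^k\in\mathbb{R}^n: k\in\mathcal{K}=\{1,\dots,K\}\}$ (feasible or infeasible), the multi-observation inverse optimization model is $\mathbf{IO}(\mathbf{X})$: minimize over $\mathbf{c},\mathbf{y},\mathbf{E},\mathbf{z}$ the distance measure $\mathscr{D}(\mathbf{E},\mathbf{A})\ge 0$ subject to $\mathbf{A}\mathbf{z}\ge\mathbf{b}$, $\mathbf{W}\mathbf{z}\ge\mathbf{q}$, $\mathbf{c}'\mathbf{z}=\mathbf{b}'\mathbf{y}$, $\mathbf{z}=\mathbf{x}^k-\epsilon^k$ for all $k\in\mathcal{K}$, $\mathbf{A}'\mathbf{y}=\mathbf{c}$, $\|\mathbf{c}\|_L=1$, $\mathbf{y}\ge\mathbf{0}$, with $\mathbf{c},\mathbf{z}\in\mathbb{R}^n$, $\mathbf{y}\in\mathbb{R}^{m_1}$, $\mathbf{E}\in\mathbb{R}^{n\times K}$ whose $k$-th column is $\epsilon^k$.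 *)

(* Defs.v *)
From mathcomp Require Import all_boot all_order all_algebra.
Set Implicit Arguments. Unset Strict Implicit. Unset Printing Implicit Defensive.
Import Order.TTheory GRing.Theory Num.Theory.
Local Open Scope ring_scope.

Definition vge (R : realFieldType) (m : nat) (u v : 'cV[R]_m) : Prop :=
  forall i : 'I_m, v i 0 <= u i 0.

Definition is_norm (R : realFieldType) (n : nat) (N : 'cV[R]_n -> R) : Prop :=
  [/\ forall x, 0 <= N x,
      forall x, N x = 0 -> x = 0,
      forall (a : R) x, N (a *: x) = `|a| * N x
    & forall x y, N (x + y) <= N x + N y].

Definition feas_region (R : realFieldType) (n m1 m2 : nat)
  (A : 'M[R]_(m1, n)) (b : 'cV[R]_m1) (W : 'M[R]_(m2, n)) (q : 'cV[R]_m2)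
  (x : 'cV[R]_n) : Prop :=
  vge (A *m x) b /\ vge (W *m x) q.

Definition nonempty_region (R : realFieldType) (n m1 m2 : nat)
  (A : 'M[R]_(m1, n)) (b : 'cV[R]_m1) (W : 'M[R]_(m2, n)) (q : 'cV[R]_m2) : Prop :=
  exists x, feas_region A b W q x.

(* full-dimensional: chi has nonempty interior (contains a sup-norm ball) *)
Definition full_dimensional (R : realFieldType) (n m1 m2 : nat)
  (A : 'M[R]_(m1, n)) (b : 'cV[R]_m1) (W : 'M[R]_(m2, n)) (q : 'cV[R]_m2) : Prop :=
  exists (x0 : 'cV[R]_n) (r : R), 0 < r /\
    forall x : 'cV[R]_n, (forall i : 'I_n, `|x i 0 - x0 i 0| < r) ->
      feas_region A b W q x.

(* no redundant constraints: removing any single constraint (relevant or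
   trivial) strictly enlarges the feasible region, i.e. some point satisfies
   all the other constraints but violates the removed one *)
Definition no_redundant (R : realFieldType) (n m1 m2 : nat)
  (A : 'M[R]_(m1, n)) (b : 'cV[R]_m1) (W : 'M[R]_(m2, n)) (q : 'cV[R]_m2) : Prop :=
  (forall j : 'I_m1, exists x : 'cV[R]_n,
      (forall i : 'I_m1, i != j -> b i 0 <= (A *m x) i 0) /\
      vge (W *m x) q /\ (A *m x) j 0 < b j 0) /\
  (forall j : 'I_m2, exists x : 'cV[R]_n,
      vge (A *m x) b /\
      (forall i : 'I_m2, i != j -> q i 0 <= (W *m x) i 0) /\
      (W *m x) j 0 < q j 0).

(* Feasibility of IO(X): the observations are the columns of X : 'M_(n, K).
   The constraint set of IO(X) (the objective D(E,A) plays no role). *)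
Definition IO_feasible_point (R : realFieldType) (n m1 m2 K : nat)
  (A : 'M[R]_(m1, n)) (b : 'cV[R]_m1) (W : 'M[R]_(m2, n)) (q : 'cV[R]_m2)
  (N : 'cV[R]_n -> R) (X : 'M[R]_(n, K))
  (c : 'cV[R]_n) (y : 'cV[R]_m1) (E : 'M[R]_(n, K)) (z : 'cV[R]_n) : Prop :=
  vge (A *m z) b /\
  vge (W *m z) q /\
  (c^T *m z) 0 0 = (b^T *m y) 0 0 /\
  (forall k : 'I_K, z = col k X - col k E) /\
  A^T *m y = c /\
  N c = 1 /\
  vge y 0.

Definition IO_feasible (R : realFieldType) (n m1 m2 K : nat)
  (A : 'M[R]_(m1, n)) (b : 'cV[R]_m1) (W : 'M[R]_(m2, n)) (q : 'cV[R]_m2)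
  (N : 'cV[R]_n -> R) (X : 'M[R]_(n, K)) : Prop :=
  exists c y E z, IO_feasible_point A b W q N X c y E z.

(* Main.v *)
Require Import Defs.
From mathcomp Require Import all_boot all_order all_algebra.
From mathcomp Require Import ring lra.
Import Order.TTheory GRing.Theory Num.Theory.
Local Open Scope ring_scope.

Theorem proposition2 (R : realFieldType) (n m1 m2 K : nat)
  (A : 'M[R]_(m1, n)) (b : 'cV[R]_m1) (W : 'M[R]_(m2, n)) (q : 'cV[R]_m2)
  (N : 'cV[R]_n -> R) (X : 'M[R]_(n, K)) :
  (0 < m1)%N ->
  is_norm N ->
  nonempty_region A b W q ->
  full_dimensional A b W q ->
  no_redundant A b W q ->
  IO_feasible A b W q N X.
Proof.
move=> m1pos [N0 Ndef Nscale Ntri] [x0 [Ax0 Wx0]] _ [nrA _].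
pose j := Ordinal m1pos.
have [x1 [Ax1 [Wx1 ltj]]] := nrA j.
have hs : (A *m x1) j 0 < (A *m x0) j 0.
  by apply: (lt_le_trans ltj); apply: Ax0.
pose t := ((A *m x0) j 0 - b j 0) / ((A *m x0) j 0 - (A *m x1) j 0).
have hd : 0 < (A *m x0) j 0 - (A *m x1) j 0 by rewrite subr_gt0.
have t0 : 0 <= t.
  by rewrite /t divr_ge0 // ?subr_ge0 ?(Ax0 j) // ltW.
have t1 : t <= 1.
  by rewrite /t ler_pdivrMr // mul1r lerD2l lerN2 ltW.
pose z := (1 - t) *: x0 + t *: x1.
have Az : forall (p : nat) (M : 'M[R]_(p, n)) i,
    (M *m z) i 0 = (1 - t) * (M *m x0) i 0 + t * (M *m x1) i 0.
  by move=> p M i; rewrite mulmxDr -!scalemxAr !mxE.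
have conv : forall u v w : R, w <= u -> w <= v -> w <= (1 - t) * u + t * v.
  move=> u v w hu hv.
  have e : (1 - t) * u + t * v - w = (1 - t) * (u - w) + t * (v - w) by ring.
  rewrite -subr_ge0 e addr_ge0 // mulr_ge0 // subr_ge0 //.
have Azj : (A *m z) j 0 = b j 0.
  rewrite Az /t; field; by rewrite lt0r_neq0.
pose av := (row j A)^T.
have av0 : av != 0.
  apply/negP => /eqP h.
  have hA : forall k, A j k = 0.
    by move=> k; have := congr1 (fun M : 'cV[R]_n => M k 0) h; rewrite !mxE.
  have e0 : forall x : 'cV[R]_n, (A *m x) j 0 = 0.
    by move=> x; rewrite mxE big1 // => k _; rewrite hA mul0r.
  by move: hs; rewrite !e0 ltxx.
pose Nv := N av.
have Nvpos : 0 < Nv.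
  rewrite lt_def N0 andbT; apply/eqP => h; by move/eqP: av0; apply; apply: Ndef.
pose c := Nv^-1 *: av.
pose y := Nv^-1 *: (delta_mx j 0 : 'cV[R]_m1).
pose E := X - \matrix_(i, k) z i 0 : 'M[R]_(n, K).
exists c, y, E, z.
split; [|split; [|split; [|split; [|split; [|split]]]]].
- move=> i; case: (eqVneq i j) => [->|hij]; first by rewrite Azj.
  by rewrite Az; apply: conv; [apply: Ax0 | apply: Ax1].
- by move=> i; rewrite Az; apply: conv; [apply: Wx0 | apply: Wx1].
- transitivity (Nv^-1 * (A *m z) j 0).
    rewrite !mxE mulr_sumr; by apply: eq_bigr => k _; rewrite !mxE mulrA.
  by rewrite Azj -scalemxAr -colE !mxE.
- move=> k; apply/matrixP => i l; rewrite !mxE (ord1 l); ring.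
- by rewrite -scalemxAr -colE -[col j A^T]trmxK tr_col trmxK.
- rewrite /c Nscale ger0_norm ?invr_ge0 ?ltW // mulVf //; exact: lt0r_neq0.
- move=> i; rewrite !mxE.
  by apply: mulr_ge0; [rewrite invr_ge0 ltW | exact: ler0n].
Qed.
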